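(* Let $\mathfrak{F}$ be any saturated formation of finite groups such that every group in $\mathfrak{F}$ is soluble and $\mathfrak{U}\subseteq\mathfrak{F}$, where $\mathfrak{U}$ is the class of all finite supersoluble groups. Then there exist a finite group $G$ and a normal subgroup $H$ of $G$ such that $G/H\in\mathfrak{F}$ and, for every maximal subgroup $M$ of $G$, the index $|\tilde{\mathrm{F}}(H):\tilde{\mathrm{F}}(H)\cap M|$ is equal to $1$ or to a prime, but $G\notin\mathfrak{F}$. In particular, this holds for $\mathfrak{F}=\mathfrak{U}$.
   Context: All groups are finite. A formation is a class of groups closed under homomorphic images and such that if $G/N_1$ and $G/N_2$ lie in it then so does $G/(N_1\cap N_2)$; it is saturated if $G/\Phi(G)\in\mathfrak{F}$ implies $G\in\mathfrak{F}$, where $\Phi(G)$ is the Frattini subgroup. For a group $X$, $\tilde{\mathrm{F}}(X)$ denotes the subgroup of $X$ containing $\Phi(X)$ defined by $\tilde{\mathrm{F}}(X)/\Phi(X)=\mathrm{Soc}(X/\Phi(X))$, the socle (product of all minimal normal subgroups) of $X/\Phi(X)$. *)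

(* Defs.v *)
From mathcomp Require Import all_boot all_fingroup all_solvable.
Set Implicit Arguments. Unset Strict Implicit. Unset Printing Implicit Defensive.
Local Open Scope group_scope.

Definition group_class := forall gT : finGroupType, {group gT} -> Prop.

Definition iso_closed (F : group_class) : Prop :=
  forall (gT hT : finGroupType) (G : {group gT}) (H : {group hT}),
    F gT G -> G \isog H -> F hT H.

Definition formation (F : group_class) : Prop :=
  [/\ iso_closed F,
      (forall (gT : finGroupType) (G N : {group gT}),
          F gT G -> N <| G -> F _ (G / N)%G) &
      (forall (gT : finGroupType) (G N1 N2 : {group gT}),
          N1 <| G -> N2 <| G -> F _ (G / N1)%G -> F _ (G / N2)%G ->
          F _ (G / (N1 :&: N2))%G)].

Definition saturated (F : group_class) : Prop :=
  forall (gT : finGroupType) (G : {group gT}), F _ (G / 'Phi(G))%G -> F gT G.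

Definition supersoluble (gT : finGroupType) (G : {group gT}) : Prop :=
  exists s : seq {group gT},
    path (fun H K : {group gT} =>
            [&& H <| G, K <| G, H \subset K & cyclic (K / H)]) 1%G s
    /\ last 1%G s = G.

Definition socle (gT : finGroupType) (G : {group gT}) : {set gT} :=
  <<\bigcup_(N : {group gT} | minnormal N G && (N \subset G)) N>>.

Definition Ftilde (gT : finGroupType) (X : {group gT}) : {set gT} :=
  coset 'Phi(X) @*^-1 socle (X / 'Phi(X))%G.

(* Main.v *)
Require Import Defs.
From HB Require Import structures.
From mathcomp Require Import all_boot all_fingroup all_solvable.
From mathcomp Require Import zify.
Set Implicit Arguments. Unset Strict Implicit. Unset Printing Implicit Defensive.
Local Open Scope group_scope.

Section Abs.
Variables (gT : finGroupType) (U K E Z : {group gT}).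
Hypotheses (cUU : abelian U) (nUK : K \subset 'N(U)) (tiUK : U :&: K = 1)
  (sEU : E \subset U) (nEK : K \subset 'N(E)) (cardUE : #|U| = (#|E| * 2)%N)
  (nsEZ : ~~ (E \subset Z)) (sZE : Z \subset E)
  (modular : forall W : {group gT}, W \subset U -> K \subset 'N(W) ->
      W \subset Z \/ E \subset W)
  (faithful : forall k, k \in K -> (forall v, v \in E -> [~ k, v] \in Z) -> k = 1)
  (nsolK : ~~ solvable K).

Let G := (U <*> K)%G.
Let H := (E <*> K)%G.

Let cEE : abelian E. Proof. exact: abelianS sEU cUU. Qed.
Let nUG : G \subset 'N(U). Proof. by rewrite join_subG normG nUK. Qed.
Let nEU : U \subset 'N(E). Proof. exact: sub_abelian_norm. Qed.
Let nEG : G \subset 'N(E). Proof. by rewrite join_subG nEU nEK. Qed.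
Let defG : G :=: U * K. Proof. exact: norm_joinEr. Qed.
Let defH : H :=: E * K. Proof. exact: norm_joinEr. Qed.
Let tiEK : E :&: K = 1.
Proof. by apply/trivgP; rewrite -tiUK setSI. Qed.
Let cardG : #|G| = (#|U| * #|K|)%N. Proof. by rewrite defG TI_cardMg. Qed.
Let cardH : #|H| = (#|E| * #|K|)%N. Proof. by rewrite defH TI_cardMg. Qed.
Let sHG : H \subset G.
Proof. by rewrite join_subG (subset_trans sEU) ?joing_subl ?joing_subr. Qed.
Let iHG : #|G : H| = 2.
Proof.
rewrite -divgS // cardG cardH cardUE mulnAC.
by rewrite mulKn // muln_gt0 !cardG_gt0.
Qed.
Let nsHG : H <| G. Proof. exact: index2_normal. Qed.

Let faith' x : x \in H -> (forall v, v \in E -> [~ x, v] \in Z) -> x \in E.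
Proof.
rewrite defH => /mulsgP[e k Ee Kk ->] cz.
have -> : k = 1.
  apply: faithful => // v Ev; have := cz v Ev.
  rewrite commMgJ.
  have -> : [~ e, v] = 1 by apply/eqP/commgP; exact: (centsP cEE) e Ee v Ev.
  by rewrite conj1g mul1g.
by rewrite mulg1.
Qed.

Let PhiZ : 'Phi(H) \subset Z.
Proof.
set P := 'Phi(H).
have nPH : H \subset 'N(P) by case/andP: (Phi_normal H).
have nEH : H \subset 'N(E) by rewrite (subset_trans sHG).
have sKH : K \subset H by rewrite joing_subr.
have sEH : E \subset H by rewrite joing_subl.
have PEZ : P :&: E \subset Z.
  have [] // := @modular (P :&: E)%G.
    by rewrite (subset_trans (subsetIr _ _)).
    by rewrite normsI // (subset_trans sKH).
  rewrite subsetI subxx andbT => sEP.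
  have defK : <<K>> = H.
    apply: Phi_nongen; apply/eqP; rewrite eqEsubset join_subG Phi_sub sKH /=.
    by rewrite join_subG (subset_trans sEP) ?joing_subl ?joing_subr.
  have : E \subset K by rewrite -(genGid K) defK.
  move=> sEK; case/negP: nsEZ; apply: subset_trans (sub1G Z).
  by rewrite -tiEK subsetI subxx sEK.
apply/subsetP=> x Px; apply: (subsetP PEZ); rewrite inE Px /=.
have Hx : x \in H by apply: (subsetP (Phi_sub H)).
apply: faith' => // v Ev; apply: (subsetP PEZ); rewrite inE; apply/andP; split.
  by rewrite commgEl groupM ?groupV // memJ_norm // (subsetP nPH) // (subsetP sEH).
by rewrite commgEr groupM ?groupV // memJ_norm ?groupV // (subsetP nEH).
Qed.

Let FtildeE : Ftilde H \subset E.
Proof.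
rewrite /Ftilde; set P := 'Phi(H).
have nPH : H \subset 'N(P) by case/andP: (Phi_normal H).
have sEH : E \subset H by rewrite joing_subl.
have nEH : H \subset 'N(E) by rewrite (subset_trans sHG).
have sPE : P \subset E.
  apply/subsetP=> x Px; apply: faith'; first exact: (subsetP (Phi_sub H)).
  move=> v Ev; apply: (subsetP PhiZ).
  by rewrite commgEl groupM ?groupV // memJ_norm // (subsetP nPH) // (subsetP sEH).
apply: (@subset_trans _ _ (coset P @*^-1 (E / P))).
  apply: morphpreS; rewrite /socle gen_subG; apply/bigcupsP=> N /andP[minN sNH].
  have nNH : (H / P) \subset 'N(N) by case/mingroupP: minN => /andP[].
  have nEPH : (H / P) \subset 'N(E / P) by exact: morphim_norms.
  have [//|tiNE] : N \subset E / P \/ N :&: (E / P) = 1.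
    case/mingroupP: minN => _ minN.
    have [->|ntNE] := eqVneq (N :&: (E / P)) 1; first by right.
    left; have := minN (N :&: (E / P))%G; rewrite ntNE normsI //= subsetIl.
    by move=> /(_ isT isT) <-; rewrite subsetIr.
  apply/subsetP=> xb Nxb; have := subsetP sNH xb Nxb.
  case/morphimP=> x Nx Hx def_xb.
  have Ex : x \in E.
    apply: faith' => // v Ev; apply: (subsetP PhiZ).
    have Nv : v \in 'N(P) by rewrite (subsetP nPH) // (subsetP sEH).
    apply: coset_idr; first by rewrite groupR.
    rewrite morphR //= -def_xb.
    suff : [~ xb, coset P v] \in N :&: (E / P) by rewrite tiNE => /set1P.
    rewrite inE.
    have Hvb : coset P v \in H / P by rewrite mem_quotient // (subsetP sEH).
    have Evb : coset P v \in E / P by rewrite mem_quotient.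
    have Hxb : xb \in H / P by rewrite (subsetP sNH).
    apply/andP; split.
      by rewrite commgEl groupM ?groupV // memJ_norm // (subsetP nNH).
    by rewrite commgEr groupM ?groupV // memJ_norm ?groupV // (subsetP nEPH).
  by rewrite def_xb mem_quotient.
rewrite quotientK ?(subset_trans sEH) //.
by rewrite mul_subG.
Qed.

Let EsubM (M : {group gT}) : maximal M G -> E \subset M.
Proof.
move=> maxM; apply: contraT => nsEM.
have sMG : M \subset G := proper_sub (maxgroupp maxM).
have nEM : M \subset 'N(E) := subset_trans sMG nEG.
have sEG : E \subset G by rewrite (subset_trans sEU) ?joing_subl.
have defEM : E * M = G.
  have sEMG : (E <*> M)%G \subset G by rewrite join_subG sEG.
  have [eqEMG|prop] := eqVproper sEMG.
    by rewrite -norm_joinEr //; exact: eqEMG.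
  case/maxgroupP: maxM => _ /(_ _ prop (joing_subr E M)) eqM.
  by case/negP: nsEM; rewrite -eqM joing_subl.
have sUG : U \subset G by rewrite joing_subl.
have defUM : U * M = G.
  apply/eqP; rewrite eqEsubset mul_subG //= -{1}defEM mulSg //.
have cardEM := mul_cardG E M; have cardUM := mul_cardG U M.
rewrite defEM in cardEM; rewrite defUM in cardUM.
have nUMG : G \subset 'N(U :&: M).
  rewrite -defEM mul_subG //.
    by rewrite (subset_trans sEU) // sub_abelian_norm // subsetIl.
  by rewrite normsI // ?normG // (subset_trans sMG).
have [sUMZ|] := @modular (U :&: M)%G (subsetIl _ _)
                   (subset_trans (joing_subr U K) nUMG).
  have eqI : U :&: M = E :&: M.
    apply/eqP; rewrite eqEsubset [E :&: M \subset _]setSI // andbT.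
    by rewrite subsetI subsetIr andbT (subset_trans sUMZ).
  have : (#|U| * #|M| = #|E| * #|M|)%N by rewrite cardEM cardUM eqI.
  move/eqP; rewrite eqn_pmul2r ?cardG_gt0 // cardUE -{2}[#|E|]muln1.
  by rewrite eqn_pmul2l ?cardG_gt0.
by rewrite subsetI => /andP[_ sEM]; rewrite sEM in nsEM.
Qed.

Lemma abs_main (F : group_class) :
  (forall (gT : finGroupType) (G : {group gT}), F gT G -> solvable G) ->
  (forall (gT : finGroupType) (G : {group gT}), supersoluble G -> F gT G) ->
    [/\ H <| G,
        F _ (G / H)%G,
        (forall M : {group gT}, maximal M G ->
           #|Ftilde H : Ftilde H :&: M| = 1%N \/ prime #|Ftilde H : Ftilde H :&: M|)
      & ~ F gT G].
Proof.
move=> Fsol Fsup; split=> //.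
- apply: Fsup; exists [:: (G / H)%G] => /=; split=> //.
  have nHG : G \subset 'N(H) by case/andP: nsHG.
  have cyc : cyclic (G / H) by apply: prime_cyclic; rewrite card_quotient // iHG.
  by rewrite normal1 normal_refl sub1G quotient_cyclic.
- move=> M maxM; left.
  have sTM : Ftilde H \subset M := subset_trans FtildeE (EsubM maxM).
  by rewrite (setIidPl sTM) indexgg.
- move=> FG; case/negP: nsolK.
  exact: solvableS (joing_subr U K) (Fsol _ _ FG).
Qed.

End Abs.


Definition vec := {set 'I_6}.
Definition sd (A B : vec) : vec := [set i | (i \in A) (+) (i \in B)].
Definition act (A : vec) (g : {perm 'I_6}) : vec := [set i | g^-1 i \in A].

Lemma in_sd A B i : (i \in sd A B) = (i \in A) (+) (i \in B).
Proof. by rewrite inE. Qed.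
Lemma in_act A g i : (i \in act A g) = (g^-1 i \in A).
Proof. by rewrite inE. Qed.

Lemma sdA : associative sd.
Proof. by move=> A B C; apply/setP=> i; rewrite !in_sd addbA. Qed.
Lemma sdC : commutative sd.
Proof. by move=> A B; apply/setP=> i; rewrite !in_sd addbC. Qed.
Lemma sd0A A : sd set0 A = A.
Proof. by apply/setP=> i; rewrite !in_sd inE. Qed.
Lemma sdA0 A : sd A set0 = A.
Proof. by rewrite sdC sd0A. Qed.
Lemma sdAA A : sd A A = set0.
Proof. by apply/setP=> i; rewrite !in_sd inE addbb. Qed.
Lemma act1 A : act A 1 = A.
Proof. by apply/setP=> i; rewrite in_act invg1 perm1. Qed.
Lemma actM A g h : act A (g * h) = act (act A g) h.
Proof. by apply/setP=> i; rewrite !in_act invMg permM. Qed.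
Lemma act_sd A B g : act (sd A B) g = sd (act A g) (act B g).
Proof. by apply/setP=> i; rewrite !(in_act, in_sd). Qed.
Lemma act0 g : act set0 g = set0.
Proof. by apply/setP=> i; rewrite in_act !inE. Qed.
Lemma card_act A g : #|act A g| = #|A|.
Proof.
have -> : act A g = (fun i => g^-1 i) @^-1: A by apply/setP=> i; rewrite !inE.
by rewrite card_preimset //; apply: perm_inj.
Qed.
Lemma odd_sd A B : odd #|sd A B| = odd #|A| (+) odd #|B|.
Proof.
have e1 := cardsUI A B.
have e2 : sd A B = (A :|: B) :\: (A :&: B).
  by apply/setP=> i; rewrite in_sd !inE; case: (i \in A); case: (i \in B).
have e3 := cardsD (A :|: B) (A :&: B).
have sub : A :&: B \subset A :|: B by apply/subsetP=> i; rewrite !inE => /andP[->].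
rewrite (setIidPr sub) in e3.
have le := subset_leq_card sub.
rewrite -oddD -e1 e2 e3 -{2}(subnK le) -addnA addnn oddD odd_double.
by rewrite addbF.
Qed.

Definition sdT := (vec * {perm 'I_6})%type.
HB.instance Definition _ := Finite.on sdT.
Definition mulT (x y : sdT) : sdT := (sd (act x.1 y.2) y.1, x.2 * y.2).
Definition oneT : sdT := (set0, 1).
Definition invT (x : sdT) : sdT := (act x.1 x.2^-1, x.2^-1).
Lemma mulTA : associative mulT.
Proof.
move=> [A g] [B h] [C l]; rewrite /mulT /=.
by rewrite mulgA act_sd actM sdA.
Qed.
Lemma mul1T : left_id oneT mulT.
Proof. by move=> [A g]; rewrite /mulT /= act0 sd0A mul1g. Qed.
Lemma mulVT : left_inverse oneT invT mulT.
Proof. by move=> [A g]; rewrite /mulT /= -actM mulVg act1 sdAA. Qed.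
HB.instance Definition _ := Finite_isGroup.Build sdT mulTA mul1T mulVT.

Lemma mulE (x y : sdT) : x * y = (sd (act x.1 y.2) y.1, x.2 * y.2).
Proof. by []. Qed.
Lemma invE (x : sdT) : x^-1 = (act x.1 x.2^-1, x.2^-1).
Proof. by []. Qed.
Lemma oneE : (1 : sdT) = (set0, 1).
Proof. by []. Qed.

Lemma avoid3 (p q s : 'I_6) : exists t : 'I_6, [&& t != p, t != q & t != s].
Proof.
have le3 : #|[set p; q; s]| <= 3.
  apply: leq_trans (leq_card_setU _ _) _; rewrite cards1 cards2; by case: (p != q).
have : 0 < #|~: [set p; q; s]|.
  have := cardsC [set p; q; s]; rewrite card_ord => e; lia.
case/card_gt0P => t; rewrite !inE => H; exists t.
by move: H; case: (t == p); case: (t == q); case: (t == s).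
Qed.

Ltac neqs := repeat match goal with
 | H : is_true (?a != ?b) |- context [?a == ?b] => rewrite (negbTE H)
 | H : is_true (?a \notin ?b) |- context [?a \in ?b] => rewrite (negbTE H)
 | H : is_true (?a \in ?b) |- context [?a \in ?b] => rewrite H
 | H : (?a \in ?b) = _ |- context [?a \in ?b] => rewrite H
 end.
Ltac fin := neqs; rewrite ?eqxx ?orbT ?orbF ?addbF ?addbT ?addbb ?orTb ?orFb //=.

Lemma cyc_even (a b c : 'I_6) : a != b -> a != c -> tperm a b * tperm a c \in 'Alt_('I_6).
Proof. by move=> ab ac; rewrite Alt_even odd_permM !odd_tperm ab ac. Qed.

Lemma set2C (a b : 'I_6) : [set a; b] = [set b; a].
Proof. by rewrite setUC. Qed.

Section Comb.
Variable X : vec -> Prop.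
Hypotheses (X0 : X set0) (Xsd : forall A B, X A -> X B -> X (sd A B))
  (Xact : forall A g, g \in 'Alt_('I_6) -> X A -> X (act A g)).

Lemma move2 (a b c : 'I_6) : a != b -> c != a -> c != b -> X [set a; b] -> X [set a; c].
Proof.
move=> ab ca cb Xab.
have [t /and3P[ta tb tc]] := avoid3 a b c.
have ba : b != a by rewrite eq_sym. have ac : a != c by rewrite eq_sym.
have bc : b != c by rewrite eq_sym. have ct : c != t by rewrite eq_sym.
have bt : b != t by rewrite eq_sym. have at_ : a != t by rewrite eq_sym.
set cy := tperm c b * tperm c t.
have Acy : cy^-1 \in 'Alt_('I_6) by rewrite groupV cyc_even.
have -> : [set a; c] = act [set a; b] cy^-1.
  apply/setP=> x; rewrite in_act invgK permM !inE.
  have [->|xc] := eqVneq x c; first by rewrite tpermL tpermD //; fin.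
  have [->|xb] := eqVneq x b.
    by rewrite tpermR tpermL; fin.
  have [->|xt] := eqVneq x t.
    by rewrite (tpermD ct bt) tpermR; fin.
  have cx : c != x by rewrite eq_sym. have bx : b != x by rewrite eq_sym.
  have tx : t != x by rewrite eq_sym.
  by rewrite !tpermD //; fin.
exact: Xact.
Qed.

Lemma two_set S : X S -> S != set0 -> S != setT ->
  exists p q : 'I_6, p != q /\ X [set p; q].
Proof.
move=> XS /set0Pn[i Si]; rewrite -subTset => /subsetPn[j _ Sj].
have [k /and3P[ki kj _]] := avoid3 i j j.
have ij : i != j by apply: contraNneq Sj => <-.
have ik : i != k by rewrite eq_sym. have jk : j != k by rewrite eq_sym.
have ji : j != i by rewrite eq_sym.
set cy := tperm i j * tperm i k.
have Acy : cy^-1 \in 'Alt_('I_6) by rewrite groupV cyc_even.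
have XD := Xsd XS (Xact Acy XS).
case Sk: (k \in S).
- exists i, j; split => //; suff <- : sd S (act S cy^-1) = [set i; j] by [].
  apply/setP=> x; rewrite in_sd in_act invgK permM !inE.
  have [->|xi] := eqVneq x i; first by rewrite tpermL tpermD //; fin.
  have [->|xj] := eqVneq x j; first by rewrite tpermR tpermL; fin.
  have [->|xk] := eqVneq x k; first by rewrite (tpermD ik jk) tpermR; fin.
  have ix : i != x by rewrite eq_sym. have jx : j != x by rewrite eq_sym.
  have kx : k != x by rewrite eq_sym.
  by rewrite !tpermD //; fin.
- exists i, k; split => //; suff <- : sd S (act S cy^-1) = [set i; k] by [].
  apply/setP=> x; rewrite in_sd in_act invgK permM !inE.
  have [->|xi] := eqVneq x i; first by rewrite tpermL tpermD //; fin.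
  have [->|xj] := eqVneq x j; first by rewrite tpermR tpermL; fin.
  have [->|xk] := eqVneq x k; first by rewrite (tpermD ik jk) tpermR; fin.
  have ix : i != x by rewrite eq_sym. have jx : j != x by rewrite eq_sym.
  have kx : k != x by rewrite eq_sym.
  by rewrite !tpermD //; fin.
Qed.

Lemma all2 (p q r s : 'I_6) : p != q -> r != s -> X [set p; q] -> X [set r; s].
Proof.
move=> pq rs Xpq.
have sr : s != r by rewrite eq_sym.
have qp : q != p by rewrite eq_sym.
have [erp|rp] := eqVneq r p.
  rewrite erp in rs sr *.
  have [-> // | sq] := eqVneq s q.
  exact: move2 pq sr sq Xpq.
have [erq|rq] := eqVneq r q.
  rewrite erq in rs sr *; rewrite set2C in Xpq.
  have [-> // | sp] := eqVneq s p.
  exact: move2 qp sr sp Xpq.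
have Xpr : X [set p; r] by apply: move2 Xpq.
rewrite set2C in Xpr.
have [-> // | sp] := eqVneq s p.
exact: move2 rp sr sp Xpr.
Qed.

Lemma alleven S : X S -> S != set0 -> S != setT -> forall T : vec, ~~ odd #|T| -> X T.
Proof.
move=> XS nS0 nST; have [p [q [pq Xpq]]] := two_set XS nS0 nST.
suff H : forall n (T : vec), #|T| <= n -> ~~ odd #|T| -> X T by move=> T; apply: H.
elim=> [|n IH] T.
  by rewrite leqn0 => /eqP/cards0_eq -> _.
move=> le ev; have [->|[i Ti]] := set_0Vmem T; first by [].
have c1 := cardsD1 i T; rewrite Ti in c1.
have : 0 < #|T :\ i|.
  case: #|T :\ i| c1 ev => // e; by rewrite e.
case/card_gt0P=> j; rewrite !inE => /andP[ji Tj].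
have ij : i != j by rewrite eq_sym.
have sT : [set i; j] \subset T by apply/subsetP=> x; rewrite !inE => /orP[]/eqP->.
set T' := T :\: [set i; j].
have cT' : #|T'| = #|T| - 2.
  by rewrite cardsD (setIidPr sT) cards2 ij.
have ge2 : 2 <= #|T|.
  by have := subset_leq_card sT; rewrite cards2 ij.
have XT' : X T'.
  apply: IH; first by rewrite cT'; lia.
  move: ev; rewrite cT'; case: #|T| ge2 => [|[|m]] //= _.
  by rewrite !subSS subn0 negbK.
have -> : T = sd [set i; j] T'.
  apply/setP=> x; rewrite in_sd !inE.
  case: eqP => [->|_] /=; first by rewrite Ti.
  case: eqP => [->|_] /=; by [rewrite Tj | ].
apply: Xsd XT'; exact: all2 Xpq.
Qed.

End Comb.

Definition Uset : {set sdT} := [set x : sdT | x.2 == 1].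
Definition Eset : {set sdT} := [set x : sdT | (x.2 == 1) && ~~ odd #|x.1|].
Definition Zset : {set sdT} := [set x : sdT | (x.2 == 1) && ((x.1 == set0) || (x.1 == setT))].
Definition Kset : {set sdT} := [set x : sdT | (x.1 == set0) && (x.2 \in 'Alt_('I_6))].

Lemma U_gs : group_set Uset.
Proof.
apply/group_setP; split; first by rewrite inE.
by move=> [A g] [B h]; rewrite !inE /= => /eqP-> /eqP->; rewrite mulg1.
Qed.
Canonical Ug := group U_gs.
Lemma E_gs : group_set Eset.
Proof.
apply/group_setP; split; first by rewrite inE oneE /= cards0 eqxx.
move=> [A g] [B h]; rewrite !inE /= => /andP[/eqP-> eA] /andP[/eqP-> eB].
by rewrite mulg1 eqxx odd_sd card_act (negbTE eA) (negbTE eB).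
Qed.
Canonical Eg := group E_gs.
Lemma Z_gs : group_set Zset.
Proof.
apply/group_setP; split; first by rewrite inE oneE /= !eqxx.
move=> [A g] [B h]; rewrite !inE /= => /andP[/eqP-> zA] /andP[/eqP-> zB].
rewrite mulg1 eqxx act1 /=.
case/orP: zA => /eqP->; first by rewrite sd0A zB.
case/orP: zB => /eqP->; first by rewrite sdA0 eqxx orbT.
by rewrite sdAA eqxx.
Qed.
Canonical Zg := group Z_gs.
Lemma inK x : (x \in Kset) = (x.1 == set0) && (x.2 \in 'Alt_('I_6)).
Proof. by rewrite /Kset in_set. Qed.
Lemma K_gs : group_set Kset.
Proof.
apply/group_setP; split; first by rewrite inK oneE /= !eqxx group1.
move=> [A g] [B h]; rewrite !inK /= => /andP[/eqP-> Ag] /andP[/eqP-> Ah].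
by rewrite act0 sd0A eqxx groupM.
Qed.
Canonical Kg := group K_gs.

Lemma conjK (x k : sdT) : x.2 = 1 -> k.1 = set0 -> x ^ k = (act x.1 k.2, 1).
Proof.
case: x => A g; case: k => B h /= -> ->.
by rewrite /conjg !mulE invE /= !act0 sd0A sdA0 mul1g mulVg.
Qed.

Lemma conj2 (x y : sdT) : (x ^ y).2 = x.2 ^ y.2.
Proof. by []. Qed.

Lemma cUU : abelian Ug.
Proof.
apply/centsP=> [[A g]]; rewrite inE /= => /eqP-> [[B h]]; rewrite inE /= => /eqP->.
by rewrite /commute !mulE /= !act1 sdC.
Qed.

Lemma nUK : Kg \subset 'N(Ug).
Proof.
apply/subsetP=> k _; rewrite inE; apply/subsetP=> y /imsetP[x Ux ->].
by rewrite inE conj2 (eqP (_ : x.2 == 1)) ?conj1g // -(@in_set _ (fun x : sdT => x.2 == 1)).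
Qed.

Lemma tiUK : Ug :&: Kg = 1.
Proof.
apply/trivgP/subsetP=> [[A g]]; rewrite in_setI inK [_ \in Ug]inE /=.
case/andP=> /eqP-> /andP[/eqP-> _]; by rewrite inE oneE.
Qed.

Lemma sEU : Eg \subset Ug.
Proof. by apply/subsetP=> x; rewrite !inE => /andP[]. Qed.

Lemma nEK : Kg \subset 'N(Eg).
Proof.
apply/subsetP=> k Kk; rewrite inE; apply/subsetP=> y /imsetP[x Ex ->].
move: Kk Ex; rewrite inK [x \in Eg]inE => /andP[/eqP k1 _] /andP[/eqP x2 ev].
by rewrite (conjK x2 k1) inE /= eqxx card_act.
Qed.

Definition Ev : {set vec} := [set A : vec | ~~ odd #|A|].

Lemma card_Ev : (#|Ev| * 2 = #|[set: vec]|)%N.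
Proof.
set f := fun A : vec => sd A [set ord0].
have finj : injective f.
  move=> A B eq; have := congr1 (sd^~ [set ord0]) eq.
  by rewrite /f -!sdA sdAA !sdA0.
have oddf A : odd #|f A| = ~~ odd #|A| by rewrite /f odd_sd cards1 addbT.
have s1 : f @: Ev \subset ~: Ev.
  by apply/subsetP=> _ /imsetP[A EA ->]; rewrite !inE oddf negbK; rewrite inE in EA.
have s2 : f @: (~: Ev) \subset Ev.
  by apply/subsetP=> _ /imsetP[A EA ->]; rewrite !inE oddf; rewrite !inE in EA.
have l1 := subset_leq_card s1; have l2 := subset_leq_card s2.
rewrite !card_imset // in l1 l2.
have e : #|~: Ev| = #|Ev| by apply/eqP; rewrite eqn_leq l2 l1.
by rewrite cardsT -(cardsC Ev) e muln2 addnn.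
Qed.

Lemma cardUE : #|Ug| = (#|Eg| * 2)%N.
Proof.
set f := fun A : vec => (A, 1 : {perm 'I_6}) : sdT.
have finj : injective f by move=> A B [].
have -> : Ug :=: f @: [set: vec].
  apply/setP=> [[A g]]; rewrite inE /=; apply/idP/imsetP.
    by move/eqP=> ->; exists A; rewrite ?inE.
  by case=> B _ [_ ->].
have -> : Eg :=: f @: Ev.
  apply/setP=> [[A g]]; rewrite inE /=; apply/idP/imsetP.
    by case/andP=> /eqP-> eA; exists A; rewrite ?inE.
  case=> B eB [eA eg]; rewrite eA eg eqxx; by rewrite inE in eB.
by rewrite !card_imset // card_Ev.
Qed.

Definition o1 : 'I_6 := @Ordinal 6 1 isT.
Definition o2 : 'I_6 := @Ordinal 6 2 isT.

Lemma nsEZ : ~~ (Eg \subset Zg).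
Proof.
apply/subsetPn; exists ([set ord0; o1], 1); first by rewrite inE /= eqxx cards2.
rewrite inE /= eqxx /=; apply/norP; split.
  by apply/set0Pn; exists ord0; rewrite !inE eqxx.
by apply/eqP=> /setP/(_ o2); rewrite !inE.
Qed.

Lemma sZE : Zg \subset Eg.
Proof.
apply/subsetP=> [[A g]]; rewrite !inE /= => /andP[-> /orP[]/eqP->].
  by rewrite cards0.
by rewrite cardsT card_ord.
Qed.

Lemma modular (W : {group sdT}) : W \subset Ug -> Kg \subset 'N(W) ->
  W \subset Zg \/ Eg \subset W.
Proof.
move=> sWU nWK.
pose X (A : vec) := (A, 1 : {perm 'I_6}) \in W.
have X0 : X set0 by have := group1 W; rewrite oneE.
have Xsd A B : X A -> X B -> X (sd A B).
  by move=> XA XB; have := groupM XA XB; rewrite mulE /= act1 mulg1.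
have Xact A g : g \in 'Alt_('I_6) -> X A -> X (act A g).
  move=> Ag XA; have Kk : ((set0, g) : sdT) \in Kg by rewrite inK /= eqxx.
  have e := memJ_norm ((A, 1) : sdT) (subsetP nWK _ Kk).
  move: XA; rewrite /X -e.
  by rewrite (conjK (x := (A, 1)) (k := (set0, g))).
have [sWZ|] := boolP (W \subset Zg); first by left.
case/subsetPn=> [[A g] WA nZA]; right.
have g1 : g = 1 by have := subsetP sWU _ WA; rewrite inE => /eqP.
rewrite g1 in WA nZA; rewrite inE /= eqxx /= in nZA.
case/norP: nZA => nA0 nAT.
have XA : X A by [].
apply/subsetP=> [[B h]]; rewrite inE /= => /andP[/eqP-> eB].
exact: (alleven X0 Xsd Xact XA nA0 nAT eB).
Qed.

Lemma faithful (k : sdT) : k \in Kg ->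
  (forall v, v \in Eg -> [~ k, v] \in Zg) -> k = 1.
Proof.
case: k => B g; rewrite inK /= => /andP[/eqP-> Ag] cz.
suff -> : g = 1 by rewrite oneE.
have fix2 i j : i != j -> act [set i; j] g = [set i; j].
  move=> ij; set A := [set i; j].
  have Ev2 : ((A, 1) : sdT) \in Eg by rewrite inE /= eqxx cards2 ij.
  have := cz _ Ev2; rewrite commgEr invE /= invg1 act1.
  rewrite (conjK (x := (A, 1)) (k := (set0, g))) // mulE /= act1 mulg1.
  rewrite inE /= eqxx /= => /orP[/eqP e|/eqP e].
    by rewrite -(sdA0 (act A g)) -(sdAA A) sdA e sd0A.
  have : #|sd (act A g) A| <= 4.
    apply: (@leq_trans #|act A g :|: A|).
      apply: subset_leq_card; apply/subsetP=> x; rewrite in_sd in_setU.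
      by case: (x \in act A g); case: (x \in A).
    by apply: leq_trans (leq_card_setU _ _) _; rewrite card_act cards2 ij.
  by rewrite e cardsT card_ord.
apply/permP=> i; rewrite perm1.
have [j /and3P[ji _ _]] := avoid3 i i i.
have [l /and3P[li lj _]] := avoid3 i j j.
have ij : i != j by rewrite eq_sym. have il : i != l by rewrite eq_sym.
have mem i' j' : i' != j' -> g^-1 i' \in [set i'; j'].
  move=> nij; rewrite -in_act fix2 // !inE eqxx //.
have e : g^-1 i = i.
  have := mem _ _ ij; have := mem _ _ il; rewrite !inE.
  case/orP=> [/eqP //|/eqP e1]; case/orP=> [/eqP //|/eqP e2].
  by case/eqP: lj; rewrite -e1 -e2.
by rewrite -{1}e permKV.
Qed.

Definition pr2f (x : sdT) : {perm 'I_6} := x.2.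
Lemma pr2M : {in [set: sdT] &, {morph pr2f : x y / x * y}}.
Proof. by []. Qed.
Canonical pr2m := Morphism pr2M.

Lemma nsolK : ~~ solvable Kg.
Proof.
apply/negP=> /(morphim_sol pr2m).
have -> : pr2m @* Kg = 'Alt_('I_6).
  rewrite morphimEsub ?subsetT //; apply/setP=> g; apply/imsetP/idP.
    by case=> x; rewrite inK => /andP[_ Ax] ->.
  by move=> Ag; exists ((set0, g) : sdT); rewrite ?inK ?eqxx.
by rewrite solvable_AltF // card_ord.
Qed.

Unset Implicit Arguments.

Theorem theorem1 (F : group_class) :
  formation F -> saturated F ->
  (forall (gT : finGroupType) (G : {group gT}), F gT G -> solvable G) ->
  (forall (gT : finGroupType) (G : {group gT}), supersoluble G -> F gT G) ->
  exists (gT : finGroupType) (G H : {group gT}),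
    [/\ H <| G,
        F _ (G / H)%G,
        (forall M : {group gT}, maximal M G ->
           #|Ftilde H : Ftilde H :&: M| = 1%N \/ prime #|Ftilde H : Ftilde H :&: M|)
      & ~ F gT G].
Proof.
move=> _ _ Fsol Fsup.
exists sdT, (Ug <*> Kg)%G, (Eg <*> Kg)%G.
exact: (@abs_main sdT Ug Kg Eg Zg cUU nUK tiUK sEU nEK cardUE nsEZ sZE
          modular faithful nsolK F Fsol Fsup).
Qed.
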